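(* Let $\mathbf A$ be a finite subdirectly irreducible cBCK-algebra that is not a chain. Then the smallest set generating $\mathbf A$ is $\mathrm{m}(\mathbf A)$ (i.e., $\mathrm{m}(\mathbf A)$ generates $\mathbf A$) if and only if $\mathcal S_\delta(\mathbf A)=\emptyset$.
   Context: A BCK-algebra is an algebra $(A,\ominus,0)$ of type $(2,0)$ satisfying $((x\ominus y)\ominus(x\ominus z))\ominus(z\ominus y)=0$, $x\ominus 0=x$, $0\ominus x=0$, and ($x\ominus y=0$ and $y\ominus x=0$ imply $x=y$); it is ordered by $x\le y$ iff $x\ominus y=0$. A cBCK-algebra is a BCK-algebra satisfying $x\ominus(x\ominus y)=y\ominus(y\ominus x)$; its order is a meet-semilattice with $x\wedge y=x\ominus(x\ominus y)$. Finite subdirectly irreducible cBCK-algebras are, as posets, rooted trees with root $0$. For $a\in A$, $\mathrm{h}(a)=|[0,a]|-1$; $n=\mathrm{h}(\mathbf A)$ is the maximum height. $\mathrm{m}(\mathbf A)$ is the set of maximal elements. For $k$ a divisor of $n$ with $k\ne 1,n$, put $A_k=\{x\in A\mid k \text{ divides } \mathrm{h}(x)\}$; $\mathcal S_\delta(\mathbf A)$ is the set of subalgebras of $\mathbf A$ whose universe is of the form $A_k\cup\mathrm{m}(\mathbf A)$ for such a $k$. *)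

(* Defs.v *)
From mathcomp Require Import all_boot.
Set Implicit Arguments. Unset Strict Implicit. Unset Printing Implicit Defensive.

Section BCK.
Variables (T : finType) (sub : T -> T -> T) (z : T).

Definition is_BCK : Prop :=
  [/\ (forall x y w, sub (sub (sub x y) (sub x w)) (sub w y) = z),
      (forall x, sub x z = x),
      (forall x, sub z x = z) &
      (forall x y, sub x y = z -> sub y x = z -> x = y)].

Definition is_cBCK : Prop :=
  is_BCK /\ forall x y, sub x (sub x y) = sub y (sub y x).

Definition bck_le (x y : T) : bool := sub x y == z.

(* congruences of the algebra (0 is a constant, so compatibility with 0 is trivial) *)
Definition is_congruence (theta : T -> T -> Prop) : Prop :=
  [/\ (forall x, theta x x),
      (forall x y, theta x y -> theta y x),
      (forall x y w, theta x y -> theta y w -> theta x w) &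
      (forall x x' y y', theta x x' -> theta y y' -> theta (sub x y) (sub x' y'))].

Definition nontrivial_rel (theta : T -> T -> Prop) : Prop :=
  exists x y, x <> y /\ theta x y.

(* subdirectly irreducible: the intersection of all congruences different from
   the identity congruence is itself different from the identity congruence *)
Definition subdirectly_irreducible : Prop :=
  exists a b : T, a <> b /\
    forall theta, is_congruence theta -> nontrivial_rel theta -> theta a b.

Definition is_chain : Prop := forall x y, bck_le x y \/ bck_le y x.

Definition max_elems : {set T} :=
  [set x | [forall y, bck_le x y ==> (y == x)]].

Definition height (a : T) : nat := #|[set y | bck_le z y && bck_le y a]|.-1.

Definition alg_height : nat := \max_(a : T) height a.

Definition subuniverse (X : {set T}) : Prop :=
  z \in X /\ forall x y, x \in X -> y \in X -> sub x y \in X.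

Definition generates (X : {set T}) : Prop :=
  forall Y : {set T}, subuniverse Y -> X \subset Y -> Y = [set: T].

Definition A_k (k : nat) : {set T} := [set x | k %| height x].

Definition in_S_delta (X : {set T}) : Prop :=
  exists k : nat, [/\ k %| alg_height, k <> 1, k <> alg_height,
                      X = A_k k :|: max_elems & subuniverse X].

Definition S_delta_empty : Prop := forall X : {set T}, ~ in_S_delta X.
End BCK.

(* Main.v *)
Require Import Defs.
From mathcomp Require Import all_boot.
From mathcomp Require Import zify.
Set Implicit Arguments. Unset Strict Implicit. Unset Printing Implicit Defensive.

Section Basics.
Variables (T : finType) (sub : T -> T -> T) (z : T).
Hypothesis HB : is_cBCK sub z.
Local Notation "x ⊖ y" := (sub x y) (at level 50, left associativity).

Lemma A1 x y w : ((x ⊖ y) ⊖ (x ⊖ w)) ⊖ (w ⊖ y) = z.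
Proof. by case: HB => [[a _ _ _] _]. Qed.
Lemma A2 x : x ⊖ z = x.
Proof. by case: HB => [[_ a _ _] _]. Qed.
Lemma A3 x : z ⊖ x = z.
Proof. by case: HB => [[_ _ a _] _]. Qed.
Lemma A4 x y : x ⊖ y = z -> y ⊖ x = z -> x = y.
Proof. by case: HB => [[_ _ _ a] _]; apply: a. Qed.
Lemma AC x y : x ⊖ (x ⊖ y) = y ⊖ (y ⊖ x).
Proof. by case: HB => _; apply. Qed.

Lemma subxx x : x ⊖ x = z.
Proof. by have := A1 x z z; rewrite !A2. Qed.

Lemma le_trans {x y w} : x ⊖ y = z -> y ⊖ w = z -> x ⊖ w = z.
Proof. by move=> h1 h2; have := A1 x w y; rewrite h1 h2 !A2. Qed.

Lemma sub_le x y : (x ⊖ y) ⊖ x = z.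
Proof. by have := A1 x y z; rewrite A2 A3 A2. Qed.

Lemma antiton x y w : y ⊖ w = z -> (x ⊖ w) ⊖ (x ⊖ y) = z.
Proof. by move=> h; have := A1 x w y; rewrite h A2. Qed.

Lemma monot x y w : x ⊖ y = z -> (x ⊖ w) ⊖ (y ⊖ w) = z.
Proof. by move=> h; have := A1 x w y; rewrite h A2. Qed.

Lemma L6 x y : (x ⊖ (x ⊖ y)) ⊖ y = z.
Proof. by have := A1 x z y; rewrite !A2. Qed.

Lemma exch_le x y w : ((x ⊖ y) ⊖ w) ⊖ ((x ⊖ w) ⊖ y) = z.
Proof.
exact: (le_trans (antiton (x ⊖ y) (L6 x w)) (A1 x y (x ⊖ w))).
Qed.

Lemma exch x y w : (x ⊖ y) ⊖ w = (x ⊖ w) ⊖ y.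
Proof. by apply: A4; apply: exch_le. Qed.

Lemma le0 x : z ⊖ x = z.
Proof. exact: A3. Qed.

Lemma le_z x : x ⊖ z = z -> x = z.
Proof. by rewrite A2. Qed.

Lemma subK {x w} : w ⊖ x = z -> x ⊖ (x ⊖ w) = w.
Proof. by move=> h; rewrite AC h A2. Qed.

Definition meet x y := x ⊖ (x ⊖ y).

Lemma meetC x y : meet x y = meet y x.
Proof. exact: AC. Qed.
Lemma meet_l x y : meet x y ⊖ x = z.
Proof. exact: sub_le. Qed.
Lemma meet_r x y : meet x y ⊖ y = z.
Proof. rewrite meetC; exact: sub_le. Qed.
Lemma meet_glb x y w : w ⊖ x = z -> w ⊖ y = z -> w ⊖ meet x y = z.
Proof.
move=> h1 h2; rewrite /meet -{1}(subK h1).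
apply: antiton; exact: antiton.
Qed.
Lemma meetxx x : meet x x = x.
Proof. by rewrite /meet subxx A2. Qed.

Lemma sub_meet x y : x ⊖ meet x y = x ⊖ y.
Proof. by rewrite /meet subK // sub_le. Qed.

Lemma key_le x y w : ((x ⊖ w) ⊖ (y ⊖ w)) ⊖ (x ⊖ y) = z.
Proof. by rewrite exch A1. Qed.

Definition ideal (I : {set T}) :=
  z \in I /\ forall x y, x ⊖ y \in I -> y \in I -> x \in I.

Lemma ideal_down {I a b} : ideal I -> a ⊖ b = z -> b \in I -> a \in I.
Proof. by case=> h0 hc h hb; apply: (hc _ b) => //; rewrite h. Qed.

Lemma ideal_tr {I a b c} : ideal I -> a ⊖ b \in I -> b ⊖ c \in I -> a ⊖ c \in I.
Proof.
move=> hI h1 h2; case: (hI) => _ hc; apply: (hc _ (a ⊖ b)) => //.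
apply: (ideal_down hI _ h2); exact: A1.
Qed.

Definition thetaI (I : {set T}) x y := x ⊖ y \in I /\ y ⊖ x \in I.

Lemma half {I x x' y y'} : ideal I -> x ⊖ x' \in I -> y' ⊖ y \in I ->
  (x ⊖ y) ⊖ (x' ⊖ y') \in I.
Proof.
move=> hI h1 h2; apply: (ideal_tr (b := x' ⊖ y)) => //.
  apply: (ideal_down hI _ h1); exact: key_le.
apply: (ideal_down hI _ h2); exact: A1.
Qed.

Lemma thetaI_cong I : ideal I -> is_congruence sub (thetaI I).
Proof.
move=> hI; split.
- by move=> x; rewrite /thetaI subxx; case: hI.
- by move=> x y [].
- by move=> x y w [h1 h2] [h3 h4]; split; apply: (ideal_tr (b := y)).
- move=> x x' y y' [h1 h2] [h3 h4]; split; exact: half.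
Qed.

Definition polar e := [set x | meet x e == z].

Lemma polar_ideal e : ideal (polar e).
Proof.
split; first by rewrite inE /meet !A3.
move=> x y; rewrite !inE => /eqP h1 /eqP h2; apply/eqP.
set w := meet x e.
have hwy : w ⊖ y = z.
  have : (w ⊖ y) ⊖ meet (x ⊖ y) e = z.
    apply: meet_glb; first by apply: monot; exact: meet_l.
    apply: le_trans (meet_r x e); exact: sub_le.
  by rewrite h1 A2.
have : w ⊖ meet y e = z by apply: meet_glb => //; exact: meet_r.
by rewrite h2 A2.
Qed.

End Basics.

Section SI.
Variables (T : finType) (sub : T -> T -> T) (z : T).
Hypothesis HB : is_cBCK sub z.
Hypothesis HSI : subdirectly_irreducible sub.
Local Notation "x ⊖ y" := (sub x y) (at level 50, left associativity).

Lemma SI_r : exists r, r <> z /\ forall I, ideal sub z I ->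
  (exists e, e \in I /\ e <> z) -> r \in I.
Proof.
case: HSI => a [b [hab h]].
exists (if a ⊖ b == z then b ⊖ a else a ⊖ b); split.
  case: eqP => [e1 e2|//]; by apply: hab; apply: (A4 HB).
move=> I hI [e [he enz]].
have [h1 h2] : thetaI sub I a b.
  apply: h; first exact: (thetaI_cong HB hI).
  exists e, z; split => //; split; first by rewrite (A2 HB).
  by rewrite (A3 HB); case: hI.
by case: eqP.
Qed.

Lemma T2 a b : a <> z -> b <> z -> meet sub a b <> z.
Proof.
move=> ha hb hm.
have [r [rnz hr]] := SI_r.
have h1 : r \in polar sub z a.
  apply: hr; first exact: (polar_ideal HB).
  by exists b; split => //; rewrite inE (meetC HB) // hm.
have h2 : r \in polar sub z r.
  apply: hr; first exact: (polar_ideal HB).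
  exists a; split => //; rewrite inE (meetC HB) //.
  by rewrite inE in h1.
by apply: rnz; move: h2; rewrite inE (meetxx HB) // => /eqP.
Qed.

End SI.

Section Tree.
Variables (T : finType) (sub : T -> T -> T) (z : T).
Hypothesis HB : is_cBCK sub z.
Hypothesis HSI : subdirectly_irreducible sub.
Local Notation "x ⊖ y" := (sub x y) (at level 50, left associativity).

Definition D x := [set y | y ⊖ x == z].
Local Notation N x := #|D x|.

Lemma inD x y : (y \in D x) = (y ⊖ x == z).
Proof. by rewrite inE. Qed.

Lemma D_sub x y : x ⊖ y = z -> D x \subset D y.
Proof.
move=> h; apply/subsetP => s; rewrite !inD => /eqP hs; apply/eqP.
exact: (le_trans HB hs h).
Qed.

Lemma N_le x y : x ⊖ y = z -> N x <= N y.
Proof. by move=> h; apply: subset_leq_card; apply: D_sub. Qed.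

Lemma N_lt x y : x ⊖ y = z -> x <> y -> N x < N y.
Proof.
move=> h hn; apply: proper_card; apply/properP; split; first exact: D_sub.
exists y; first by rewrite inD (subxx HB).
rewrite inD; apply/eqP => h2; apply: hn; exact: (A4 HB).
Qed.

Lemma N_eq x y : x ⊖ y = z -> N x = N y -> x = y.
Proof.
move=> h he; case: (eqVneq x y) => // /eqP hn.
by have := N_lt h hn; rewrite he ltnn.
Qed.

Lemma Nz : N z = 1.
Proof.
rewrite -(cards1 z); apply: eq_card => s; rewrite inD !inE (A2 HB).
by [].
Qed.

Lemma N_gt1 x : x <> z -> 1 < N x.
Proof.
move=> h; rewrite -Nz; apply: N_lt; first exact: (A3 HB).
by move=> e; apply: h.
Qed.

Lemma N_pos x : 0 < N x.
Proof. by apply/card_gt0P; exists z; rewrite inD (A3 HB). Qed.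

Lemma height_N x : height sub z x = (N x).-1.
Proof.
rewrite /height; congr (_.-1); apply: eq_card => y.
by rewrite !inE /bck_le (A3 HB) eqxx.
Qed.

Lemma coat x s : s ⊖ x = z -> s <> x -> exists c, [/\ s ⊖ c = z, c ⊖ x = z, c <> x &
  forall v, c ⊖ v = z -> v ⊖ x = z -> v = c \/ v = x].
Proof.
move=> h1 h2.
pose S := [set v | (s ⊖ v == z) && (v ⊖ x == z) && (v != x)].
have sS : s \in S by rewrite inE (subxx HB) h1 eqxx /=; apply/eqP.
case: (@arg_maxnP _ s (fun v => v \in S) (fun v => N v) sS) => c /= hcS hmax.
move: hcS; rewrite inE => /andP[/andP[/eqP hc1 /eqP hc2] /eqP hc3].
exists c; split => // v hv1 hv2.
case: (eqVneq v x) => [->|/eqP hvx]; first by right.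
left; apply/esym/N_eq => //; apply/eqP; rewrite eqn_leq N_le //.
apply: hmax; rewrite inE hv2 eqxx /= andbT; apply/andP; split; last by apply/eqP.
apply/eqP; exact: (le_trans HB hc1 hv1).
Qed.

Lemma atom_of x c : c ⊖ x = z -> c <> x ->
  (forall v, c ⊖ v = z -> v ⊖ x = z -> v = c \/ v = x) ->
  x ⊖ c <> z /\ forall s, s ⊖ (x ⊖ c) = z -> s = z \/ s = x ⊖ c.
Proof.
move=> h1 h2 h3; split.
  by move=> h; apply: h2; apply: (A4 HB).
move=> s hs.
have sx : s ⊖ x = z := le_trans HB hs (sub_le HB x c).
have hc : c ⊖ (x ⊖ s) = z.
  by have := antiton HB x hs; rewrite (subK HB h1).
case: (h3 _ hc (sub_le HB x s)) => e.
  by right; rewrite -e (subK HB sx).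
by left; rewrite -(subK HB sx) e (subxx HB).
Qed.

Lemma coat_uniq x c1 c2 :
  c1 ⊖ x = z -> c1 <> x -> (forall v, c1 ⊖ v = z -> v ⊖ x = z -> v = c1 \/ v = x) ->
  c2 ⊖ x = z -> c2 <> x -> (forall v, c2 ⊖ v = z -> v ⊖ x = z -> v = c2 \/ v = x) ->
  c1 = c2.
Proof.
move=> a1 a2 a3 b1 b2 b3.
have [n1 at1] := atom_of a1 a2 a3.
have [n2 at2] := atom_of b1 b2 b3.
have hm := T2 HB HSI n1 n2.
have e1 : meet sub (x ⊖ c1) (x ⊖ c2) = x ⊖ c1.
  by case: (at1 _ (meet_l HB (x ⊖ c1) (x ⊖ c2))).
have e2 : meet sub (x ⊖ c1) (x ⊖ c2) = x ⊖ c2.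
  by case: (at2 _ (meet_r HB (x ⊖ c1) (x ⊖ c2))).
by rewrite -(subK HB a1) -(subK HB b1) -e1 e2.
Qed.

Lemma chain_below x s t : s ⊖ x = z -> t ⊖ x = z -> s ⊖ t = z \/ t ⊖ s = z.
Proof.
have [n] := ubnP (N x); elim: n x s t => // n IH x s t hn hs ht.
case: (eqVneq s x) => [->|/eqP hsx]; first by right.
case: (eqVneq t x) => [->|/eqP htx]; first by left.
have [c1 [c11 c12 c13 c14]] := coat hs hsx.
have [c2 [c21 c22 c23 c24]] := coat ht htx.
have ec := coat_uniq c12 c13 c14 c22 c23 c24.
subst c2.
have hlt : N c1 < N x := N_lt c12 c13.
exact: (IH c1 s t (leq_trans hlt _) c11 c21).
Qed.

Lemma Nsub x t : t ⊖ x = z -> N (x ⊖ t) + N t = N x + 1.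
Proof.
move=> htx.
pose B := [set s | t ⊖ s == z].
have hc := cardsID B (D x).
have e1 : D x :\: B = D t :\ t.
  apply/setP => s; rewrite !inE.
  case: (eqVneq (s ⊖ x) z) => hs /=; last first.
    rewrite andbF; apply/esym/negbTE; apply/negP => /andP[_ /eqP h].
    by move/eqP: hs; apply; exact: (le_trans HB h htx).
  rewrite andbT; case: (chain_below hs htx) => h.
    rewrite h eqxx andbT; case: (eqVneq s t) => [->|hst]; first by rewrite (subxx HB) eqxx.
    apply/negP => /eqP h2; move/eqP: hst; apply; exact: (A4 HB h h2).
  rewrite h eqxx /=; apply/esym/negbTE; apply/negP => /andP[/eqP hst /eqP h2].
  exact: hst (A4 HB h2 h).
have e2 : #|D t :\ t| = (N t).-1.
  by rewrite (cardsD1 t (D t)) inD (subxx HB) eqxx.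
have e3 : D x :&: B = [set x ⊖ s | s in D (x ⊖ t)].
  apply/setP => u; apply/idP/imsetP.
    rewrite !inE => /andP [/eqP hu1 /eqP hu2].
    exists (x ⊖ u); first by rewrite inD; apply/eqP; apply: (antiton HB).
    by rewrite (subK HB hu1).
  move=> [s hs ->]; rewrite !inE (sub_le HB) eqxx /=.
  move: hs; rewrite inD => /eqP hs.
  by have := antiton HB x hs; rewrite (subK HB htx) => ->.
have e4 : #|[set x ⊖ s | s in D (x ⊖ t)]| = N (x ⊖ t).
  apply: card_in_imset => s1 s2; rewrite !inD => /eqP h1 /eqP h2 e.
  have h1' := le_trans HB h1 (sub_le HB x t).
  have h2' := le_trans HB h2 (sub_le HB x t).
  by rewrite -(subK HB h1') e (subK HB h2').
have := N_pos t.
move: hc; rewrite e1 e2 e3 e4; lia.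
Qed.

Lemma Nsub_gen x y : N (x ⊖ y) + N (meet sub x y) = N x + 1.
Proof. rewrite -(sub_meet HB x y); apply: Nsub; exact: meet_l. Qed.

End Tree.

Section Main.
Variables (T : finType) (sub : T -> T -> T) (z : T).
Hypothesis HB : is_cBCK sub z.
Hypothesis HSI : subdirectly_irreducible sub.
Hypothesis HNC : ~ is_chain sub z.
Local Notation "x ⊖ y" := (sub x y) (at level 50, left associativity).
Local Notation N x := #|D sub z x|.

Lemma inmaxP x : reflect (forall y, x ⊖ y = z -> y = x) (x \in max_elems sub z).
Proof.
rewrite inE; apply: (iffP forallP) => h y.
  by move=> e; have := h y; rewrite /bck_le e eqxx /= => /eqP.
by apply/implyP => /eqP e; apply/eqP; apply: h.
Qed.

Lemma below_max x : exists a, a \in max_elems sub z /\ x ⊖ a = z.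
Proof.
have xS : x \in [set v | x ⊖ v == z] by rewrite inE (subxx HB).
case: (@arg_maxnP _ x (fun v => v \in [set v | x ⊖ v == z]) (fun v => N v) xS)
  => a /= ha hmax.
move: ha; rewrite inE => /eqP ha.
exists a; split => //; apply/inmaxP => y hy.
apply/esym/(N_eq HB) => //; apply/eqP; rewrite eqn_leq (N_le HB hy) /=.
by apply: hmax; rewrite inE; apply/eqP; exact: (le_trans HB ha hy).
Qed.

Lemma max_nz a : a \in max_elems sub z -> a <> z.
Proof.
move/inmaxP => h e; subst a; apply: HNC => x y; left.
by rewrite /bck_le (h x (A3 HB x)) (h y (A3 HB y)) (subxx HB).
Qed.

Lemma two_max : exists a b, [/\ a \in max_elems sub z, b \in max_elems sub z & a <> b].
Proof.
have : ~~ [forall x, [forall y, bck_le sub z x y || bck_le sub z y x]].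
  apply/negP => /forallP h; apply: HNC => x y.
  by have /forallP/(_ y)/orP := h x.
case/forallPn => x /forallPn [y]; rewrite negb_or => /andP [h1 h2].
have [a [ha hxa]] := below_max x.
have [b [hb hyb]] := below_max y.
exists a, b; split => // e; subst b.
case: (chain_below HB HSI hxa hyb) => e.
  by rewrite /bck_le e eqxx in h1.
by rewrite /bck_le e eqxx in h2.
Qed.

Lemma dir1 : generates sub z (max_elems sub z) -> S_delta_empty sub z.
Proof.
move=> hg X [k [hk k1 kn hX hsub]].
have XT : X = setT by apply: hg => //; rewrite hX; apply: subsetUr.
have [a [b [ha hb hab]]] := two_max.
pose c := meet sub a b.
have cnz : c <> z := T2 HB HSI (max_nz ha) (max_nz hb).
have cna : c <> a.
  move=> e; apply: hab; move/inmaxP: (ha) => hA; apply/esym; apply: hA; rewrite -e; exact: (meet_r HB).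
pose S := [set v | (v != z) && (v ⊖ c == z)].
have cS : c \in S by rewrite inE (subxx HB) eqxx andbT; apply/eqP.

case: (@arg_minnP _ c (fun v => v \in S) (fun v => N v) cS) => t /= tS hmin.
move: tS; rewrite inE => /andP [/eqP tnz /eqP tc].
have Nt : N t = 2.
  have -> : D sub z t = [set z; t].
    apply/setP => s; rewrite inD !inE; apply/idP/idP.
      move=> /eqP hs; case: (eqVneq s z) => [->|snz]; first by rewrite ?eqxx.
      apply/orP; right; apply/eqP; apply: (N_eq HB hs); apply/eqP.
      rewrite eqn_leq (N_le HB hs) /=; apply: hmin.
      by rewrite inE snz /=; apply/eqP; exact: (le_trans HB hs tc).
    by case/orP => /eqP ->; rewrite ?(A3 HB) ?(subxx HB).
  rewrite cards2; case: eqP => // e; by exfalso; apply: tnz.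
have tnm : t \notin max_elems sub z.
  apply/negP => /inmaxP h.
  have ta : t ⊖ a = z := le_trans HB tc (meet_l HB a b).
  have eat := h a ta; subst a.
  by apply: cna; apply: (A4 HB) => //; exact: meet_l.
have : t \in X by rewrite XT inE.
rewrite hX in_setU (negbTE tnm) orbF /A_k inE height_N // Nt dvdn1 => /eqP.
exact: k1.
Qed.

Section Str.
Variable Y : {set T}.
Hypothesis HY : subuniverse sub z Y.
Hypothesis Hm : max_elems sub z \subset Y.
Hypothesis HYT : Y != setT.

Lemma Ycl x y : x \in Y -> y \in Y -> x ⊖ y \in Y.
Proof. by case: HY => _; apply. Qed.
Lemma Yz : z \in Y.
Proof. by case: HY. Qed.
Lemma Ymax a : a \in max_elems sub z -> a \in Y.
Proof. by move=> h; apply: (subsetP Hm). Qed.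

Lemma str : in_S_delta sub z Y.
Proof.
have [a [b [ha hb hab]]] := two_max.
pose S := [set y in Y | y != z].
have aS : a \in S by rewrite inE Ymax //=; apply/eqP; exact: max_nz.
case: (@arg_minnP _ a (fun v => v \in S) (fun v => N v) aS) => e /= eS hmin.
move: eS; rewrite inE => /andP [eY /eqP enz].
pose d := (N e).-1.
have Ne := N_gt1 HB enz.
have e_le : forall y, y \in Y -> y <> z -> e ⊖ y = z.
  move=> y yY ynz.
  have mY : meet sub e y \in Y by apply: Ycl => //; apply: Ycl.
  have mnz : meet sub e y <> z := T2 HB HSI enz ynz.
  have me : meet sub e y = e.
    apply: (N_eq HB (meet_l HB e y)); apply/eqP; rewrite eqn_leq (N_le HB (meet_l HB e y)) /=.
    by apply: hmin; rewrite inE mY /=; apply/eqP.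
  by rewrite -me; exact: meet_r.
have hdiv : forall y, y \in Y -> d %| (N y).-1.
  move=> y; have [n] := ubnP (N y); elim: n y => // n IH y hn yY.
  case: (eqVneq y z) => [->|/eqP ynz]; first by rewrite (Nz HB) dvdn0.
  have hey := e_le y yY ynz.
  have hs := Nsub HB HSI hey.
  have := N_pos HB (y ⊖ e).
  have h2 : d %| (N (y ⊖ e)).-1 by apply: IH; [lia | exact: Ycl].
  move=> hp.
  have -> : (N y).-1 = (N (y ⊖ e)).-1 + d by rewrite /d; lia.
  by rewrite dvdn_add.
have reach : forall x a0, a0 \in Y -> x ⊖ a0 = z -> d %| (N x).-1 -> x \in Y.
  move=> x a0 a0Y hxa hdx.
  pose s j := iter j (fun t => t ⊖ e) a0.
  have hs : forall j, [/\ s j \in Y, s j ⊖ a0 = z & (N (s j)).-1 = (N a0).-1 - j * d].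
    elim=> [|j [h1 h2 h3]]; first by rewrite /s /= (subxx HB) mul0n subn0.
    have -> : s j.+1 = s j ⊖ e by [].
    split; first exact: Ycl.
      exact: (le_trans HB (sub_le HB _ _) h2).
    case: (eqVneq (s j) z) => [e0|/eqP snz].
      rewrite e0 (A3 HB) (Nz HB) /=.
      move: h3; rewrite e0 (Nz HB) /= mulSn => h3; lia.
    have hs := Nsub HB HSI (e_le _ h1 snz).
    have := N_pos HB (s j ⊖ e).
    move: h3; rewrite mulSn /d; lia.
  have ha0 := hdiv a0 a0Y.
  have Nxa := N_le HB hxa.
  have hd := dvdn_sub ha0 hdx.
  pose j := ((N a0).-1 - (N x).-1) %/ d.
  have hj : j * d = (N a0).-1 - (N x).-1 by rewrite /j divnK.
  have [h1 h2 h3] := hs j.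
  have NN : N (s j) = N x.
    have := N_pos HB (s j); have := N_pos HB x; move: h3; rewrite hj; lia.
  case: (chain_below HB HSI h2 hxa) => hh.
    by rewrite -(N_eq HB hh NN).
  by rewrite (N_eq HB hh (esym NN)).
have Yeq : Y = A_k sub z d :|: max_elems sub z.
  apply/setP => x; rewrite in_setU /A_k inE height_N //.
  apply/idP/idP; first by move=> xY; rewrite hdiv.
  case/orP => [hx|hx]; last exact: Ymax.
  have [a1 [ha1 hxa1]] := below_max x.
  exact: (reach x a1 (Ymax ha1) hxa1 hx).
case: (@arg_maxnP _ a (fun _ => true) (fun v => N v) erefl) => a0 _ hmax0.
have a0m : a0 \in max_elems sub z.
  apply/inmaxP => y hy; apply/esym/(N_eq HB hy); apply/eqP.
  by rewrite eqn_leq (N_le HB hy) /=; apply: hmax0.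
have hn : alg_height sub z = (N a0).-1.
  apply/eqP; rewrite eqn_leq; apply/andP; split.
    apply/bigmax_leqP => i _; rewrite height_N //.
    have := hmax0 i erefl; have := N_pos HB i; lia.
  by rewrite -height_N //; apply: leq_bigmax.
have [b0 [hb0 hb0a]] : exists b0, b0 \in max_elems sub z /\ b0 <> a0.
  case: (eqVneq a a0) => [ea|/eqP na]; last by exists a.
  by exists b; split => // eb; apply: hab; rewrite ea eb.
exists d; split => //.
- by rewrite hn; apply: hdiv; apply: Ymax.
- move=> d1; move/eqP: HYT; apply; apply/setP => x; rewrite inE Yeq in_setU /A_k inE d1.
  by rewrite dvd1n.
- move=> dn.
  pose c := meet sub a0 b0.
  have cnz : c <> z := T2 HB HSI (max_nz a0m) (max_nz hb0).
  have cna : c <> a0.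
    move=> ec; apply: hb0a; move/inmaxP: (a0m) => hA; apply: hA; rewrite -ec; exact: (meet_r HB).
  have Nc1 := N_gt1 HB cnz.
  have Nc2 := N_lt HB (meet_l HB a0 b0) cna.
  have hsg := Nsub_gen HB HSI a0 b0.
  have hdv := hdiv _ (Ycl (Ymax a0m) (Ymax hb0)).
  move: Nc1 Nc2 hsg; rewrite /c => Nc1 Nc2 hsg.
  have pos : 0 < (N (a0 ⊖ b0)).-1 by lia.
  have := dvdn_leq pos hdv.
  move: dn; rewrite hn /d; lia.
Qed.
End Str.

Lemma dir2 : S_delta_empty sub z -> generates sub z (max_elems sub z).
Proof.
move=> hS Y hY hm.
case: (eqVneq Y setT) => // hYT.
by exfalso; apply: (hS Y); apply: str.
Qed.

End Main.

Theorem mainTheorem5 (T : finType) (bop : T -> T -> T) (z : T) :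
  is_cBCK bop z ->
  subdirectly_irreducible bop ->
  ~ is_chain bop z ->
  (generates bop z (max_elems bop z) <-> S_delta_empty bop z).
Proof.
move=> HB HSI HNC; split; [exact: dir1 | exact: dir2].
Qed.
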